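(* Let $n\ge w\ge t\ge 1$ and $q,q'\ge 1$ be integers. Let $S\subset Q_{q*}^n$ be an $A(n,q,w,t)$ design. For each pair consisting of a codeword $a\in S$, whose non-$*$ entries in increasing order of position are $a^1,\dots,a^t$, and a word $(b_1,\dots,b_t)\in Q_{q'}^t$, form the word in $(Q_q\times Q_{q'})_*^n$ which has $*$ exactly where $a$ has $*$ and whose $j$-th non-$*$ entry (in increasing order of position) is $(a^j,b_j)$, $j=1,\dots,t$. Identifying $Q_q\times Q_{q'}$ with $Q_{qq'}$, let $U\subset Q_{qq'*}^n$ be the set of all such words. Then $U$ is an $A(n,qq',w,t)$ design.
   Context: For an integer $q\ge1$, $Q_q=\{0,1,\dots,q-1\}$ and $Q_{q*}=Q_q\cup\{*\}$ (for a finite alphabet $A$, $A_*=A\cup\{*\}$). The weight of a word $u\in Q_{q*}^n$ is $n$ minus the number of $*$ symbols in $u$. For $u,v\in Q_{q*}^n$ we say $u$ extends $v$ if $u_i=v_i$ for every position $i$ with $v_i\neq *$. An $A(n,q,w,t)$ design is a set $S$ of words of weight $t$ in $Q_{q*}^n$ such that every word of weight $w$ in $Q_{q*}^n$ extends exactly one element of $S$. *)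

(* Defs.v *)
From mathcomp Require Import all_boot.
From mathcomp Require Import zify.
Set Implicit Arguments. Unset Strict Implicit. Unset Printing Implicit Defensive.

(* Words of Q_{q*}^n: functions 'I_n -> option 'I_q, None = the symbol * *)
Definition word (n q : nat) := {ffun 'I_n -> option 'I_q}.

Definition weight n q (u : word n q) : nat := #|[set i | u i != None]|.

Definition extends n q (u v : word n q) : Prop :=
  forall i : 'I_n, v i != None -> u i = v i.

Definition is_design (n q w t : nat) (S : {set word n q}) : Prop :=
  (forall a, a \in S -> weight a = t) /\
  (forall u : word n q, weight u = w ->
     exists! a, a \in S /\ extends u a).

(* identification Q_q x Q_q' ~ Q_{qq'} : (x,y) |-> x*q' + y *)
Lemma pair_code_subproof q q' (x : 'I_q) (y : 'I_q') : x * q' + y < q * q'.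
Proof.
have hx := ltn_ord x; have hy := ltn_ord y.
nia.
Qed.

Definition pair_code q q' (x : 'I_q) (y : 'I_q') : 'I_(q * q') :=
  Ordinal (pair_code_subproof x y).

(* number of non-* positions of a strictly before position i
   (so the non-* entry at i is the (rank+1)-th one, 0-indexed rank) *)
Definition nonstar_rank n q (a : word n q) (i : 'I_n) : nat :=
  #|[set k : 'I_n | (k < i) && (a k != None)]|.

Definition combine_word n q q' t (a : word n q) (b : t.-tuple 'I_q')
  : word n (q * q') :=
  [ffun i => match a i, onth b (nonstar_rank a i) with
             | Some x, Some y => Some (pair_code x y)
             | _, _ => None
             end].

Definition product_design n q q' t (S : {set word n q}) : {set word n (q * q')} :=
  [set combine_word a b | a in S, b in [set: t.-tuple 'I_q']].

(* Main.v *)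
Require Import Defs.
From mathcomp Require Import all_boot.
From mathcomp Require Import zify.
Set Implicit Arguments. Unset Strict Implicit. Unset Printing Implicit Defensive.

Lemma dfst_subproof q q' (y : 'I_(q * q')) : y %/ q' < q.
Proof.
have := ltn_ord y; move: (nat_of_ord y) => m; clear y.
case: q' => [|q'] h; first by rewrite muln0 in h.
by rewrite ltn_divLR.
Qed.

Lemma dsnd_subproof q q' (y : 'I_(q * q')) : y %% q' < q'.
Proof.
have := ltn_ord y; move: (nat_of_ord y) => m; clear y.
case: q' => [|q'] h; first by rewrite muln0 in h.
by rewrite ltn_pmod.
Qed.

Definition dfst q q' (y : 'I_(q * q')) : 'I_q := Ordinal (dfst_subproof y).
Definition dsnd q q' (y : 'I_(q * q')) : 'I_q' := Ordinal (dsnd_subproof y).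

Lemma pair_codeK q q' (y : 'I_(q * q')) : pair_code (dfst y) (dsnd y) = y.
Proof. by apply: val_inj => /=; rewrite -divn_eq. Qed.

Lemma dfst_pair q q' (x : 'I_q) (z : 'I_q') : dfst (pair_code x z) = x.
Proof.
apply: val_inj => /=; have hz := ltn_ord z.
have q'0 : 0 < q' by apply: leq_ltn_trans hz.
rewrite divnDl ?dvdn_mull // mulnK //.
by rewrite divn_small // addn0.
Qed.

Lemma dsnd_pair q q' (x : 'I_q) (z : 'I_q') : dsnd (pair_code x z) = z.
Proof.
apply: val_inj => /=; have hz := ltn_ord z.
by rewrite modnMDl modn_small.
Qed.

Lemma rank_lt n q (a : word n q) i : a i != None -> nonstar_rank a i < weight a.
Proof.
move=> h; apply: proper_card; apply/properP; split.
  by apply/subsetP=> k; rewrite !inE => /andP[_ ->].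
by exists i; rewrite !inE ?ltnn // h.
Qed.

Lemma rank_mono n q (a : word n q) i j :
  a i != None -> a j != None -> i < j -> nonstar_rank a i < nonstar_rank a j.
Proof.
move=> hi hj ij; apply: proper_card; apply/properP; split.
  apply/subsetP=> k; rewrite !inE => /andP[ki ->]; rewrite andbT.
  exact: ltn_trans ki ij.
by exists i; rewrite !inE ?ltnn // ij hi.
Qed.

Lemma rank_inj n q (a : word n q) i j :
  a i != None -> a j != None -> nonstar_rank a i = nonstar_rank a j -> i = j.
Proof.
move=> hi hj e; case: (ltngtP i j) => h.
- by have := rank_mono hi hj h; rewrite e ltnn.
- by have := rank_mono hj hi h; rewrite e ltnn.
- exact: val_inj.
Qed.

Lemma rank_surj n q (a : word n q) j : j < weight a ->
  exists2 i, a i != None & nonstar_rank a i = j.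
Proof.
move=> hj.
set s := map (nonstar_rank a) (enum [set i | a i != None]).
have us : uniq s.
  rewrite map_inj_in_uniq ?enum_uniq // => x y; rewrite !mem_enum !inE => hx hy.
  exact: rank_inj.
have sz : size s = weight a by rewrite size_map -cardE.
have sub : {subset s <= iota 0 (weight a)}.
  move=> x /mapP [i]; rewrite mem_enum inE => hi ->.
  by rewrite mem_iota add0n rank_lt.
have [_ E] := uniq_min_size us sub (eq_leq (etrans (size_iota 0 _) (esym sz))).
have : j \in s by rewrite E mem_iota.
by case/mapP=> i; rewrite mem_enum inE => hi ->; exists i.
Qed.

Lemma onth_lt T (x0 : T) (s : seq T) k : k < size s -> onth s k = Some (nth x0 s k).
Proof. by move=> h; rewrite onthE (nth_map x0). Qed.

Lemma combine_support n q q' t (a : word n q) (b : t.-tuple 'I_q') i :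
  weight a = t -> (combine_word a b i != None) = (a i != None).
Proof.
move=> wa; rewrite ffunE; case E: (a i) => [x|] //=.
have := rank_lt (i := i) (a := a); rewrite E wa => /(_ isT) h.
by rewrite (onth_lt (tnth b (Ordinal h))) ?size_tuple.
Qed.

Lemma weight_combine n q q' t (a : word n q) (b : t.-tuple 'I_q') :
  weight a = t -> weight (combine_word a b) = t.
Proof.
move=> wa; rewrite -{2}wa /weight; apply: eq_card => i.
by rewrite !inE combine_support.
Qed.

Theorem proposition3 (n w t q q' : nat) (S : {set word n q}) :
  1 <= t -> t <= w -> w <= n -> 1 <= q -> 1 <= q' ->
  @is_design n q w t S ->
  @is_design n (q * q') w t (@product_design n q q' t S).
Proof.
move=> ht htw hwn hq hq' [HS HU]; split.
  move=> c /imset2P [a b aS _ ->]; exact: weight_combine (HS a aS).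
move=> u wu.
pose u1 : word n q := [ffun i => omap (@dfst q q') (u i)].
have wu1 : weight u1 = w.
  rewrite -wu /weight; apply: eq_card => i; rewrite !inE ffunE.
  by case: (u i).
have [a [[aS ext] uniqa]] := HU u1 wu1.
have wa := HS a aS.
pose d0 : 'I_q' := Ordinal hq'.
pose F (j : 'I_t) : 'I_q' :=
  match [pick i | (a i != None) && (nonstar_rank a i == j)] with
  | Some i => match u i with Some y => dsnd y | None => d0 end
  | None => d0 end.
pose b := [tuple F j | j < t].
have onthb : forall i, a i != None ->
    onth b (nonstar_rank a i) = Some (odflt d0 (omap (@dsnd q q') (u i))).
  move=> i hi; have hr : nonstar_rank a i < t by rewrite -wa rank_lt.
  rewrite (onth_lt d0) ?size_tuple // -[nonstar_rank a i]/(nat_of_ord (Ordinal hr)).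
  rewrite nth_mktuple /F; case: pickP => [k /andP[hk /eqP ek]|].
    by rewrite (rank_inj hk hi ek); case: (u i).
  by move/(_ i); rewrite hi eqxx.
exists (combine_word a b); split.
  split; first by apply/imset2P; exists a b; rewrite ?inE.
  move=> i; rewrite combine_support // => hi.
  have := ext i hi; rewrite ffunE; move: hi.
  rewrite ffunE; case E: (a i) => [x|] // _.
  rewrite (onthb i) ?E //.
  case U: (u i) => [y|] //= [<-]; by rewrite pair_codeK.
move=> c [/imset2P [a' b' a'S _ ->] ext'].
have wa' := HS a' a'S.
have ea : a' = a.
  symmetry; apply: uniqa; split=> // i hi; rewrite ffunE.
  have := ext' i; rewrite combine_support // => /(_ hi) ->.
  rewrite ffunE; move: hi; case E: (a' i) => [x|] // _.
  have := rank_lt (i := i) (a := a'); rewrite E wa' => /(_ isT) h.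
  by rewrite (onth_lt (tnth b' (Ordinal h))) ?size_tuple //= dfst_pair.
subst a'; congr combine_word.
apply: val_inj; apply: eq_from_onth => k.
case: (ltnP k t) => hk; last by rewrite !onth_default ?size_tuple.
have [i hi ek] : exists2 i, a i != None & nonstar_rank a i = k by apply: rank_surj; rewrite wa.
rewrite -ek onthb //.
have := ext' i; rewrite combine_support // => /(_ hi) ->.
rewrite ffunE; move: hi; case E: (a i) => [x|] // _.
rewrite (onth_lt d0) ?size_tuple; last by rewrite -wa rank_lt ?E.
by rewrite /= dsnd_pair.
Qed.
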